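(* Let $H$ be a bigraph and $a,c$ distinct vertices of $H$. The vertex $(a,c)$ of $H^+$ is implied by some non-trivial strong component $S$ of $H^+$ (i.e. $(a,c)\notin S$ and some vertex of $S$ has an arc to $(a,c)$) if and only if $H$ contains an induced path $a,b,c,d,e$ with $N(a)\subseteq N(c)$. Moreover, if such a path exists, then the non-trivial strong component implying $(a,c)$ contains the pairs $(a,d),(a,e),(b,d),(b,e)$.
   Context: A bigraph is a bipartite graph $H$ with fixed bipartition $(B,W)$ (black/white colours); $N(x)$ is the neighbourhood of $x$ in $H$. The pair-digraph $H^+$ has vertices all ordered pairs $(u,v)$ of distinct vertices of $H$, and arcs $(u,v)\to(u',v)$ whenever $u,v$ have the same colour, $uu'\in E(H)$, $vu'\notin E(H)$, and $(u,v)\to(u,v')$ whenever $u,v$ have different colours, $vv'\in E(H)$, $uv\notin E(H)$. A strong component is non-trivial if it has more than one vertex. *)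

(* Defs.v *)
From mathcomp Require Import all_boot.
Set Implicit Arguments. Unset Strict Implicit. Unset Printing Implicit Defensive.

(* A bigraph: vertex set a finType T, colouring col : T -> bool
   (true = black, false = white), edge relation E : rel T which is
   symmetric and only joins vertices of different colours. *)
Definition bigraph (T : finType) (col : T -> bool) (E : rel T) : Prop :=
  symmetric E /\ (forall x y, E x y -> col x != col y).

Section PairDigraph.
Variables (T : finType) (col : T -> bool) (E : rel T).

Definition pvert (p : T * T) : bool := p.1 != p.2.

Definition parc : rel (T * T) := fun p q =>
  [&& pvert p, pvert q &
   if col p.1 == col p.2 then
     (q.2 == p.2) && E p.1 q.1 && ~~ E p.2 q.1
   else
     (q.1 == p.1) && E p.2 q.2 && ~~ E p.1 q.2].

Definition scc (x : T * T) : {set T * T} :=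
  [set y | connect parc x y && connect parc y x].

Definition nontrivial_scc (S : {set T * T}) : Prop :=
  (exists2 x, pvert x & S = scc x) /\ 1 < #|S|.

Definition scc_implies (S : {set T * T}) (p : T * T) : Prop :=
  p \notin S /\ exists2 x, x \in S & parc x p.

Definition induced_path5 (a b c d e : T) : Prop :=
  [/\ uniq [:: a; b; c; d; e],
      [&& E a b, E b c, E c d & E d e] &
      ~~ [|| E a c, E a d, E a e, E b d, E b e | E c e]].

Definition nbhd_sub (x y : T) : Prop := forall z, E x z -> E y z.
End PairDigraph.

(* Main.v *)
Require Import Defs.
From mathcomp Require Import all_boot.

Lemma conn_last (T' : finType) (e : rel T') (a b : T') :
  connect e a b -> a != b -> exists2 z, connect e a z & e z b.
Proof.
move/connectP=> [p pth ->]; case/lastP: p pth => [|p z] /=.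
  by rewrite eqxx.
rewrite rcons_path last_rcons => /andP[pth ez] _.
by exists (last a p) => //; apply/connectP; exists p.
Qed.

Lemma conn_sink (T' : finType) (e : rel T') (a b : T') :
  (forall y, ~~ e a y) -> connect e a b -> b = a.
Proof.
move=> H /connectP[[|z p] /= pth ->] //.
by move: pth => /andP[eaz _]; move: (H z); rewrite eaz.
Qed.

Section Aux.
Variables (T : finType) (col : T -> bool) (E : rel T).
Hypothesis HB : bigraph col E.

Lemma cE x y : E x y -> col y = ~~ col x.
Proof. by case: HB => _ h /h; case: (col x); case: (col y). Qed.

Lemma symE x y : E x y = E y x.
Proof. by case: HB. Qed.

Lemma pred_in x0 y : 1 < #|scc col E x0| -> y \in scc col E x0 ->
  exists2 z, z \in scc col E x0 & parc col E z y.
Proof.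
move=> /card_gt1P[u [w [uS wS uw]]] yS.
have [y' y'S ny] : exists2 y', y' \in scc col E x0 & y' != y.
  case: (eqVneq u y) => [uy|]; last by exists u.
  by exists w => //; rewrite -uy eq_sym.
move: (y'S) (yS); rewrite !inE => /andP[c1 c2] /andP[c3 c4].
have [z cz pz] := conn_last _ _ _ _ (connect_trans c2 c3) ny.
exists z => //; rewrite inE; apply/andP; split.
  exact: connect_trans c1 cz.
exact: connect_trans (connect1 pz) c4.
Qed.

Lemma parcE p q : parc col E p q ->
  [/\ p.1 != p.2, q.1 != q.2 &
   if col p.1 == col p.2 then [/\ q.2 = p.2, E p.1 q.1 & ~~ E p.2 q.1]
   else [/\ q.1 = p.1, E p.2 q.2 & ~~ E p.1 q.2]].
Proof.
rewrite /parc /pvert => /and3P[h1 h2]; rewrite h1 h2; case: (col p.1 == col p.2).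
  by case/andP=> /andP[/eqP -> ->] ->; split.
by case/andP=> /andP[/eqP -> ->] ->; split.
Qed.

End Aux.

Lemma eqbN b : (b == ~~ b) = false. Proof. by case: b. Qed.
Lemma eqNb b : (~~ b == b) = false. Proof. by case: b. Qed.

Lemma neqE (T : finType) (E : rel T) x y z : E x z -> ~~ E y z -> x != y.
Proof. by move=> h1 h2; apply/eqP=> exy; move: h2; rewrite -exy h1. Qed.

Lemma neqC (T : finType) (col : T -> bool) x y : col x != col y -> x != y.
Proof. by move=> h; apply/eqP=> exy; move: h; rewrite exy eqxx. Qed.

Theorem lemma2p6 (T : finType) (col : T -> bool) (E : rel T)
  (HB : bigraph col E) (a c : T) (hac : a != c) :
  ((exists S : {set T * T},
      nontrivial_scc col E S /\ scc_implies col E S (a, c)) <->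
   (exists b d e : T, induced_path5 E a b c d e /\ nbhd_sub E a c))
  /\
  (forall b d e : T, induced_path5 E a b c d e -> nbhd_sub E a c ->
     exists S : {set T * T},
       [/\ nontrivial_scc col E S, scc_implies col E S (a, c) &
           [/\ (a, d) \in S, (a, e) \in S, (b, d) \in S & (b, e) \in S]]).
Proof.
have cE' := @cE _ _ _ HB; have sE := @symE _ _ _ HB.
have part2 : forall b d e : T, induced_path5 E a b c d e -> nbhd_sub E a c ->
     exists S : {set T * T},
       [/\ nontrivial_scc col E S, scc_implies col E S (a, c) &
           [/\ (a, d) \in S, (a, e) \in S, (b, d) \in S & (b, e) \in S]].
  move=> b d e [_ /and4P[Eab Ebc Ecd Ede] N] Nsub.
  move: N; rewrite !negb_or => /andP[Nac /andP[Nad /andP[Nae /andP[Nbd /andP[Nbe Nce]]]]].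
  have cb := cE' _ _ Eab; have cc := cE' _ _ Ebc; rewrite cb negbK in cc.
  have cd := cE' _ _ Ecd; rewrite cc in cd; have ce := cE' _ _ Ede; rewrite cd negbK in ce.
  have ad : a != d by apply: (@neqC _ col); rewrite cd eqbN.
  have be : b != e by apply: (@neqC _ col); rewrite cb ce eqNb.
  have ae : a != e by apply: (@neqE _ E _ _ _ Eab); rewrite sE.
  have bd : b != d by apply: (@neqE _ E b d a); rewrite // sE.
  have h1 : parc col E (a,d) (a,e) by rewrite /parc /pvert /= cd eqbN ad ae !eqxx Ede Nae.
  have h2 : parc col E (a,e) (b,e) by rewrite /parc /pvert /= ce !eqxx ae be Eab (sE e b) Nbe.
  have h3 : parc col E (b,e) (b,d) by rewrite /parc /pvert /= ce cb eqNb be bd !eqxx (sE e d) Ede Nbd.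
  have h4 : parc col E (b,d) (a,d) by rewrite /parc /pvert /= cd cb !eqxx bd ad (sE b a) Eab (sE d a) Nad.
  have h5 : parc col E (a,d) (a,c) by rewrite /parc /pvert /= cd eqbN ad hac !eqxx (sE d c) Ecd Nac.
  have sink : forall y, ~~ parc col E (a,c) y.
    move=> [y1 y2]; apply/negP => /parcE [] /=; rewrite cc eqxx => _ _ [_ Eay /negP]; apply.
    exact: Nsub.
  have inS : forall y, connect (parc col E) (a,d) y -> connect (parc col E) y (a,d) ->
    y \in scc col E (a,d) by move=> y c1 c2; rewrite inE c1 c2.
  have c1 := connect1 h1; have c2 := connect1 h2; have c3 := connect1 h3; have c4 := connect1 h4.
  have adS : (a,d) \in scc col E (a,d) by apply: inS; apply: connect0.
  have aeS : (a,e) \in scc col E (a,d).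
    by apply: inS => //; apply: connect_trans c4; apply: connect_trans c3.
  exists (scc col E (a,d)); split.
  - split; first by exists (a,d).
    by apply/card_gt1P; exists (a,d), (a,e); split => //; apply/eqP => -[] de; move: ce; rewrite -de cd; case: (col a).
  - split; last by exists (a,d).
    apply/negP; rewrite inE => /andP[_ /(@conn_sink _ _ _ _ sink)] [edc].
    by move: Ecd; rewrite edc => /cE'; case: (col _).
  - split => //.
    + by apply: inS => //; apply: (connect_trans c1); apply: (connect_trans c2).
    + by apply: inS => //; [apply: (connect_trans c1) | apply: (connect_trans c3)].
split => //; split; last first.
  by move=> [b [d [e [P N]]]]; case: (part2 _ _ _ P N) => S [h1 h2 _]; exists S.
move=> [S [[[x0 px0 ->] gt1] [nin [[x1 x2] xS xarc]]]].
have cE2 : forall x y, E x y -> col x = ~~ col y.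
  by move=> x y /cE' ->; rewrite negbK.
have inS : forall y, connect (parc col E) x0 y -> connect (parc col E) y x0 ->
    y \in scc col E x0 by move=> y h1 h2; rewrite inE h1 h2.
have inS1 : forall y, y \in scc col E x0 -> connect (parc col E) x0 y.
  by move=> y; rewrite inE => /andP[].
have inS2 : forall y, y \in scc col E x0 -> connect (parc col E) y x0.
  by move=> y; rewrite inE => /andP[].
have acS1 : connect (parc col E) x0 (a, c).
  exact: connect_trans (inS1 _ xS) (connect1 xarc).
move: (@parcE _ _ _ _ _ xarc) => [/= nx1 _].
case: ifP => cx [ex e1 ne1].
-
  subst x2.
  have [[z1 z2] zS /parcE[/= _ _]] := @pred_in _ _ _ _ _ gt1 xS.
  have cu : col x1 = col c := eqP cx.
  have ca : col a = ~~ col c by rewrite (cE' _ _ e1) cu.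
  case: ifP => cz [ez1 ez2 nz].
    by exfalso; move/eqP: cz; rewrite -ez1 (cE2 _ _ ez2) cu; case: (col c).
  subst z1.
  have cy : col z2 = ~~ col c := cE2 _ _ ez2.
  have [[w1 w2] wS /parcE[/= _ pw]] := @pred_in _ _ _ _ _ gt1 zS.
  case: ifP => cw [ew1 ew2 nw]; last first.
    by exfalso; move/negbT: cw; rewrite -ew1 (cE2 _ _ ew2) cu cy; case: (col c).
  have nyu : ~~ E z2 x1 by rewrite ew1.
  exfalso; move/negP: nin; apply.
  have az : a != z2 by apply: (@neqE _ E a z2 x1); rewrite // sE.
  have naz : ~~ E a z2 by apply/negP => /cE'; rewrite cy ca; case: (col c).
  have ay : parc col E (a,c) (a,z2).
    by rewrite /parc /pvert /= ca eqNb hac az !eqxx (sE c z2) ez2 naz.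
  have uy : parc col E (a,z2) (x1,z2).
    by rewrite /parc /pvert /= ca cy eqxx az pw !eqxx (sE a x1) e1 nyu.
  apply: inS => //; apply: (connect_trans (connect1 ay)).
  exact: (connect_trans (connect1 uy) (inS2 _ zS)).
-
  subst x1.
  have cv : col x2 = ~~ col a by move/negbT: cx; case: (col a); case: (col x2).
  have cc : col c = col a by rewrite (cE' _ _ e1) cv negbK.
  have [[z1 z2] zS /parcE[/= _ pz]] := @pred_in _ _ _ _ _ gt1 xS.
  case: ifP => cz [ez1 ez2 nz]; last first.
    by exfalso; move/negbT: cz; rewrite -ez1 (cE2 _ _ ez2) cv negbK eqxx.
  subst z2.
  have cp : col z1 = ~~ col a := cE2 _ _ ez2.
  have [[w1 w2] wS /parcE[/= _ _]] := @pred_in _ _ _ _ _ gt1 zS.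
  case: ifP => cw [ew1 ew2 nw].
    by exfalso; move/eqP: cw; rewrite -ew1 (cE2 _ _ ew2) cp cv negbK; case: (col a).
  subst w1.
  have cq : col w2 = col a by rewrite (cE2 _ _ ew2) cv negbK.
  have [[r1 r2] rS /parcE[/= _ _]] := @pred_in _ _ _ _ _ gt1 wS.
  case: ifP => cr [er1 er2 nr]; last first.
    by exfalso; move/negbT: cr; rewrite -er1 (cE2 _ _ er2) cq cp eqxx.
  have npq : ~~ E w2 z1 by rewrite er1.
  have Nsub : nbhd_sub E a c.
    move=> t Eat; apply/negPn/negP => Nct; move/negP: nin; apply.
    have ct : col t = ~~ col a := cE' _ _ Eat.
    have tc' : t != c by apply: (@neqC _ col); rewrite ct cc eqNb.
    have tx : t != x2 by apply: (@neqE _ E t x2 a); rewrite // sE.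
    have ntx : ~~ E t x2 by apply/negP => /cE'; rewrite cv ct; case: (col a).
    have tc : parc col E (a,c) (t,c).
      by rewrite /parc /pvert /= cc !eqxx hac tc' Eat Nct.
    have tv : parc col E (t,c) (t,x2).
      by rewrite /parc /pvert /= cc ct eqNb tc' tx !eqxx (sE c x2) e1 ntx.
    have va : parc col E (t,x2) (a,x2).
      by rewrite /parc /pvert /= cv ct !eqxx tx pz (sE t a) Eat nz.
    apply: inS => //; apply: (connect_trans (connect1 tc)).
    apply: (connect_trans (connect1 tv)); apply: (connect_trans (connect1 va)).
    exact: inS2 _ xS.
  exists z1, x2, w2; split => //.
  have Eaz : E a z1 by rewrite sE.
  have Ezc : E z1 c by rewrite sE; exact: Nsub _ Eaz.
  have naw : ~~ E a w2 by apply/negP => /cE'; rewrite cq; case: (col a).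
  have ncw : ~~ E c w2 by apply/negP => /cE'; rewrite cq cc; case: (col a).
  have az : a != z1 by apply: (@neqC _ col); rewrite cp eqbN.
  have ax : a != x2 by apply: (@neqC _ col); rewrite cv eqbN.
  have aw : a != w2 by apply: (@neqE _ E a w2 z1).
  have zc : z1 != c by apply: (@neqC _ col); rewrite cp cc eqNb.
  have zx : z1 != x2 by apply: (@neqE _ E z1 x2 a); rewrite // sE.
  have zw : z1 != w2 by apply: (@neqC _ col); rewrite cp cq eqNb.
  have cx2 : c != x2 by apply: (@neqC _ col); rewrite cc cv eqbN.
  have cw2 : c != w2 by apply: (@neqE _ E c w2 z1); rewrite // sE.
  have xw : x2 != w2 by apply: (@neqC _ col); rewrite cq cv eqNb.
  split.
  - by rewrite /= !inE !negb_or az hac ax aw zc zx zw cx2 cw2 xw.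
  - by rewrite Eaz Ezc (sE c x2) e1 (sE x2 w2) ew2.
  - by rewrite (negbTE ne1) (sE a x2) (negbTE nz) (negbTE naw) (negbTE nw) (sE z1 w2) (negbTE npq) (negbTE ncw).
Qed.
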